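(* For every channel $\mathcal{N}\in\mathrm{CPTP}(A\to B)$, with $R$ a replica of $A$, $$\log|B|-D_{\max}(\mathcal{N}\,\|\,\mathcal{R})=\min_{\psi\in\mathrm{Pure}(RA)}H_{\min}(B|R)_{\mathcal{N}^{A\to B}(\psi^{RA})},$$ where $D_{\max}(\mathcal{N}\|\mathcal{R})=\log\min\{t\ge0: t\mathcal{R}-\mathcal{N}\text{ is completely positive}\}$, $\mathcal{R}=\mathcal{R}^{A\to B}$ is the uniform channel $\rho\mapsto\mathrm{Tr}[\rho]\mathbf{u}^B$, and for a bipartite state $\rho^{RB}$, $H_{\min}(B|R)_\rho=-D_{\max}(\rho^{RB}\|\rho^R\otimes I^B)$ with $D_{\max}(\rho\|\sigma)=\log\min\{t: t\sigma\ge\rho\}$.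
   Context: Systems are finite-dimensional, $\mathbf{u}^B=I^B/|B|$, $\log$ base 2; $\mathrm{Pure}(RA)$ is the set of pure states on $RA$; $\mathcal{N}^{A\to B}(\psi^{RA})$ means $(\mathrm{id}^R\otimes\mathcal{N})(\psi^{RA})$. *)

(* Defs.v *)
From HB Require Import structures.
From mathcomp Require Import all_boot all_order all_algebra.
From mathcomp Require Import all_classical all_reals all_analysis.
From mathcomp Require Import complex mxtens.

Set Implicit Arguments.
Unset Strict Implicit.
Unset Printing Implicit Defensive.

Import Order.TTheory GRing.Theory Num.Theory.
Local Open Scope ring_scope.
Local Open Scope classical_set_scope.

Section QuantumDefs.
Variable R : realType.
Local Notation C := (R[i]).

Definition log2 (x : R) : R := ln x / ln 2.

Definition adjmx {m n} (A : 'M[C]_(m, n)) : 'M[C]_(n, m) := (map_mx Num.conj A)^T.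

(* positive semidefinite: v^* A v >= 0 for every vector v (order of C: real and >= 0) *)
Definition psd {n} (A : 'M[C]_n) : Prop :=
  forall v : 'cV[C]_n, 0 <= (adjmx v *m A *m v) 0 0.

Definition loewner_le {n} (A B : 'M[C]_n) : Prop := psd (B - A).

Definition pure_state {n} (psi : 'M[C]_n) : Prop :=
  exists v : 'cV[C]_n, adjmx v *m v = 1 /\ psi = v *m adjmx v.

(* block (i,j) of an operator on R (dim k) tensor A (dim a); index (i,r) <-> mxtens_index (i,r) *)
Definition blockmx {k a} (X : 'M[C]_(k * a)) (i j : 'I_k) : 'M[C]_a :=
  \matrix_(r, s) X (mxtens_index (i, r)) (mxtens_index (j, s)).

(* (id^R (dim k) tensor N) applied to X = sum_{ij} |i><j| (x) X_ij *)
Definition id_tens {k a b} (N : 'M[C]_a -> 'M[C]_b) (X : 'M[C]_(k * a)) : 'M[C]_(k * b) :=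
  \sum_(i < k) \sum_(j < k) (delta_mx i j *t N (blockmx X i j)).

Definition positive_map {a b} (N : 'M[C]_a -> 'M[C]_b) : Prop :=
  forall X, psd X -> psd (N X).

Definition completely_positive {a b} (N : 'M[C]_a -> 'M[C]_b) : Prop :=
  forall k : nat, positive_map (@id_tens k a b N).

Definition trace_preserving {a b} (N : 'M[C]_a -> 'M[C]_b) : Prop :=
  forall X, \tr (N X) = \tr X.

Definition unif_channel {a b} (X : 'M[C]_a) : 'M[C]_b :=
  (\tr X / b%:R) *: 1%:M.

Definition Dmax_channel {a b} (N : 'M[C]_a -> 'M[C]_b) : R :=
  log2 (inf [set t : R | 0 <= t /\
         completely_positive (fun X => (t%:C)%C *: (@unif_channel a b X) - N X)]).

Definition Dmax_state {n} (rho sigma : 'M[C]_n) : R :=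
  log2 (inf [set t : R | loewner_le rho ((t%:C)%C *: sigma)]).

Definition ptrace2 {k b} (rho : 'M[C]_(k * b)) : 'M[C]_k :=
  \matrix_(i, j) \sum_(l < b) rho (mxtens_index (i, l)) (mxtens_index (j, l)).

Definition Hmin {k b} (rho : 'M[C]_(k * b)) : R :=
  - Dmax_state rho (ptrace2 rho *t (1%:M : 'M[C]_b)).

End QuantumDefs.

(* Main.v *)
Require Import Defs.
From HB Require Import structures.
From mathcomp Require Import all_boot all_order all_algebra.
From mathcomp Require Import all_classical all_reals all_analysis.
From mathcomp Require Import complex mxtens.
From mathcomp Require Import ring lra.
Import Order.TTheory GRing.Theory Num.Theory.
Local Open Scope ring_scope.

Set Implicit Arguments.
Unset Strict Implicit.
Unset Printing Implicit Defensive.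

Section S_A.
Variable R : realType.
Local Notation C := (R[i]).

Definition qf {n} (A : 'M[C]_n) (v : 'cV[C]_n) : C := (adjmx v *m A *m v) 0 0.

Lemma qfE n (A : 'M[C]_n) v :
  qf A v = \sum_x \sum_y (v x 0)^* * A x y * v y 0.
Proof.
rewrite /qf mxE; under eq_bigr => y _ do rewrite mxE big_distrl /=.
rewrite exchange_big /=; apply: eq_bigr => x _; apply: eq_bigr => y _.
by rewrite !mxE.
Qed.

Lemma sum_tens k b (F : 'I_(k * b) -> C) :
  \sum_x F x = \sum_i \sum_r F (mxtens_index (i, r)).
Proof.
rewrite pair_big /=; apply: reindex => /=.
by exists (@mxtens_unindex k b) => x _; rewrite (mxtens_indexK, mxtens_unindexK) //; case: x.
Qed.
End S_A.

Section S_B.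
Variable R : realType.
Local Notation C := (R[i]).

Section Lin.
Variables (a b : nat) (N : 'M[C]_a -> 'M[C]_b) (HN : linear N).
Lemma lin0 : N 0 = 0.
Proof.
have := HN 1 0 0; rewrite scale1r addr0 => H.
by rewrite -[RHS](subrr (N 0)) {2}H addrK scale1r.
Qed.
Lemma linD u v : N (u + v) = N u + N v.
Proof. by have := HN 1 u v; rewrite !scale1r. Qed.
Lemma linZ c u : N (c *: u) = c *: N u.
Proof. by have := HN c u 0; rewrite !addr0 lin0 addr0. Qed.
Lemma lin_sum (I : finType) (F : I -> 'M[C]_a) : N (\sum_i F i) = \sum_i N (F i).
Proof. exact: (big_morph N linD lin0). Qed.
End Lin.

Lemma id_tensE k a b (N : 'M[C]_a -> 'M[C]_b) X i j r s :
  @id_tens R k a b N X (mxtens_index (i, r)) (mxtens_index (j, s)) = N (blockmx X i j) r s.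
Proof.
rewrite /id_tens summxE (bigD1 i) //=.
have -> : \sum_(i0 < k | i0 != i)
     (\sum_(j0 < k) delta_mx i0 j0 *t N (blockmx X i0 j0))
       (mxtens_index (i, r)) (mxtens_index (j, s)) = 0.
  apply: big1 => i' Hi'; rewrite summxE big1 // => j' _.
  by rewrite tensmxE mxE eq_sym (negbTE Hi') mul0r.
rewrite addr0 summxE (bigD1 j) //=.
have -> : \sum_(j0 < k | j0 != j)
     (delta_mx i j0 *t N (blockmx X i j0))
       (mxtens_index (i, r)) (mxtens_index (j, s)) = 0.
  apply: big1 => j' Hj'.
  by rewrite tensmxE mxE eqxx eq_sym (negbTE Hj') mul0r.
by rewrite addr0 tensmxE mxE !eqxx mul1r.
Qed.

Lemma block_decomp k a (X : 'M[C]_(k * a)) i j :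
  blockmx X i j = \sum_r \sum_s X (mxtens_index (i, r)) (mxtens_index (j, s)) *: delta_mx r s.
Proof.
rewrite {1}[blockmx X i j]matrix_sum_delta; apply: eq_bigr => r _; apply: eq_bigr => s _.
by rewrite mxE.
Qed.

Lemma N_block k a b (N : 'M[C]_a -> 'M[C]_b) (HN : linear N) (X : 'M[C]_(k * a)) i j u v :
  N (blockmx X i j) u v =
  \sum_r \sum_s X (mxtens_index (i, r)) (mxtens_index (j, s)) * N (delta_mx r s) u v.
Proof.
rewrite block_decomp lin_sum // summxE; apply: eq_bigr => r _.
rewrite lin_sum // summxE; apply: eq_bigr => s _.
by rewrite linZ // mxE.
Qed.

End S_B.

Section S_Cx.
Variable R : realType.
Local Notation C := (R[i]).

Lemma sum_only n x (F : 'I_n -> C) : (forall y, y != x -> F y = 0) -> \sum_y F y = F x.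
Proof.
move=> H; rewrite (bigD1 x) //=.
by rewrite [\sum_(y < n | y != x) F y]big1 ?addr0.
Qed.

Arguments sum_only {n} x {F}.

Lemma qf_delta n (D : 'M[C]_n) x : qf D (delta_mx x 0) = D x x.
Proof.
rewrite qfE (sum_only x) => [|y Hy]; last first.
  by rewrite big1 // => z _; rewrite !mxE (negbTE Hy) conjC0 !mul0r.
rewrite (sum_only x) => [|y Hy]; last first.
  by rewrite !mxE (negbTE Hy) mulr0.
by rewrite !mxE !eqxx conjC1 mul1r mulr1.
Qed.

Lemma psd_tr n (D : 'M[C]_n) : psd D -> 0 <= \tr D.
Proof.
move=> H; rewrite /mxtrace; apply: sumr_ge0 => x _.
by rewrite -qf_delta; apply: H.
Qed.

Lemma loewner_tr n (A B : 'M[C]_n) : loewner_le A B -> \tr A <= \tr B.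
Proof. by move=> /psd_tr; rewrite linearB /= subr_ge0. Qed.

Lemma tr_tens k a (X : 'M[C]_(k * a)) :
  \tr X = \sum_i \tr (blockmx X i i).
Proof.
rewrite /mxtrace sum_tens; apply: eq_bigr => i _; apply: eq_bigr => r _.
by rewrite mxE.
Qed.

Lemma tr_id_tens k a b (N : 'M[C]_a -> 'M[C]_b) (TP : trace_preserving N) (X : 'M[C]_(k * a)) :
  \tr (id_tens N X) = \tr X.
Proof.
rewrite tr_tens [RHS]tr_tens; apply: eq_bigr => i _.
rewrite -TP; apply: eq_bigr => r _.
by rewrite mxE id_tensE.
Qed.

Lemma ptrace2_id_tens k a b (N : 'M[C]_a -> 'M[C]_b) (TP : trace_preserving N)
   (X : 'M[C]_(k * a)) i j :
  ptrace2 (id_tens N X) i j = \tr (blockmx X i j).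
Proof.
rewrite mxE -TP; apply: eq_bigr => r _; by rewrite id_tensE.
Qed.

Lemma tr_tens1 k b (A : 'M[C]_k) : \tr (A *t (1%:M : 'M[C]_b)) = \tr A * b%:R.
Proof.
rewrite /mxtrace sum_tens mulr_suml; apply: eq_bigr => i _.
rewrite (eq_bigr (fun _ => A i i)) => [|r _]; first by rewrite sumr_const card_ord mulr_natr.
by rewrite tensmxE mxE eqxx mulr1.
Qed.

End S_Cx.
Arguments sum_only {R n} x {F}.

Section S_D.
Variable R : realType.
Local Notation C := (R[i]).

Lemma adj_entry n (v w : 'cV[C]_n) : (adjmx w *m v) 0 0 = ((adjmx v *m w) 0 0)^*.
Proof.
rewrite !mxE rmorph_sum; apply: eq_bigr => x _.
by rewrite !mxE rmorphM /= conjCK mulrC.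
Qed.

Lemma pure_psd n (psi : 'M[C]_n) : pure_state psi -> psd psi.
Proof.
move=> [v [_ ->]] w.
have -> : adjmx w *m (v *m adjmx v) *m w = (adjmx w *m v) *m (adjmx v *m w).
  by rewrite !mulmxA.
rewrite mxE big_ord1 adj_entry.
by rewrite mulrC mul_conjC_ge0.
Qed.

Lemma pure_tr n (psi : 'M[C]_n) : pure_state psi -> \tr psi = 1.
Proof.
move=> [v [H ->]]; transitivity ((adjmx v *m v) 0 0); last by rewrite H !mxE.
rewrite /mxtrace mxE; apply: eq_bigr => x _; rewrite !mxE big_ord1 !mxE mulrC.
by [].
Qed.

Lemma unif_entry a b (X : 'M[C]_a) r s :
  (@unif_channel R a b X) r s = \tr X / b%:R * (r == s)%:R.
Proof. by rewrite /unif_channel !mxE. Qed.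

Lemma id_tens_TRN k a b (N : 'M[C]_a -> 'M[C]_b) (TP : trace_preserving N) (t : R)
  (X : 'M[C]_(k * a)) :
  id_tens (fun Y => (t%:C)%C *: @unif_channel R a b Y - N Y) X =
  (((t / b%:R)%:C)%C *: (ptrace2 (id_tens N X) *t (1%:M : 'M[C]_b))) - id_tens N X.
Proof.
apply/matrixP => x y; case: (mxtens_indexP x) => i r; case: (mxtens_indexP y) => j s.
rewrite [LHS](@id_tensE R k a b).
rewrite !mxE !mxtens_indexK /= (@id_tensE R k a b).
have -> : \sum_(l < b) id_tens N X (mxtens_index (i, l)) (mxtens_index (j, l)) = \tr (blockmx X i j).
  by rewrite -TP; apply: eq_bigr => l _; rewrite (@id_tensE R k a b).
rewrite rmorphM fmorphV rmorph_nat /=.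
congr (_ - _); ring.
Qed.

End S_D.

Section S_E.
Variable R : realType.
Local Notation C := (R[i]).

Lemma tr_ptrace2 k b (Y : 'M[C]_(k * b)) : \tr (ptrace2 Y) = \tr Y.
Proof. by rewrite /mxtrace sum_tens; apply: eq_bigr => i _; rewrite mxE. Qed.

Lemma lower k a b (N : 'M[C]_a -> 'M[C]_b) (TP : trace_preserving N) (t : R)
  (CP : completely_positive (fun Y => (t%:C)%C *: @unif_channel R a b Y - N Y))
  (X : 'M[C]_(k * a)) : psd X ->
  loewner_le (id_tens N X) (((t / b%:R)%:C)%C *: (ptrace2 (id_tens N X) *t (1%:M : 'M[C]_b))).
Proof. by move=> HX; rewrite /loewner_le -id_tens_TRN //; apply: CP. Qed.

Lemma st_lb k a b (N : 'M[C]_a -> 'M[C]_b) (TP : trace_preserving N) (X : 'M[C]_(k * a))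
  (trX : \tr X = 1) (b0 : (0 < b)%N) (s : R) :
  loewner_le (id_tens N X) ((s%:C)%C *: (ptrace2 (id_tens N X) *t (1%:M : 'M[C]_b))) ->
  b%:R^-1 <= s.
Proof.
move/loewner_tr; rewrite linearZ /= tr_tens1 tr_ptrace2 tr_id_tens // trX mul1r.
have -> : ((s%:C)%C * b%:R) = ((s * b%:R)%:C)%C by rewrite rmorphM rmorph_nat.
have -> : (1 : C) = ((1 : R)%:C)%C by rewrite rmorph1.
by rewrite lecR -div1r ler_pdivrMr ?ltr0n.
Qed.

End S_E.

Section S_F.
Variable R : realType.
Local Notation C := (R[i]).

Arguments sum_only {R n} x {F}.

Definition bf n (A : 'M[C]_n) (u w : 'cV[C]_n) : C := (adjmx u *m A *m w) 0 0.

Lemma entryD m n (A B : 'M[C]_(m, n)) i j : (A + B) i j = A i j + B i j.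
Proof. by rewrite mxE. Qed.
Lemma entryZ m n c (A : 'M[C]_(m, n)) i j : (c *: A) i j = c * A i j.
Proof. by rewrite mxE. Qed.

Lemma adjmxD m n (A B : 'M[C]_(m, n)) : adjmx (A + B) = adjmx A + adjmx B.
Proof. by apply/matrixP => i j; rewrite !mxE rmorphD. Qed.
Lemma adjmxZ m n c (A : 'M[C]_(m, n)) : adjmx (c *: A) = c^* *: adjmx A.
Proof. by apply/matrixP => i j; rewrite !mxE rmorphM. Qed.
Lemma adjmxM m n p (A : 'M[C]_(m, n)) (B : 'M[C]_(n, p)) :
  adjmx (A *m B) = adjmx B *m adjmx A.
Proof. by rewrite /adjmx map_mxM trmx_mul. Qed.
Lemma adjmxK m n (A : 'M[C]_(m, n)) : adjmx (adjmx A) = A.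
Proof. by apply/matrixP => i j; rewrite !mxE conjCK. Qed.

Lemma bf_delta n (A : 'M[C]_n) x y : bf A (delta_mx x 0) (delta_mx y 0) = A x y.
Proof.
rewrite /bf mxE (sum_only y) => [|z Hz]; last by rewrite [delta_mx y 0 z 0]mxE (negbTE Hz) mulr0.
rewrite mxE (sum_only x) => [|z Hz]; last by rewrite !mxE (negbTE Hz) conjC0 mul0r.
by rewrite !mxE !eqxx conjC1 mul1r mulr1.
Qed.

Lemma qf_comb n (A : 'M[C]_n) u w c :
  qf A (u + c *: w) = bf A u u + c * bf A u w + c^* * bf A w u + c^* * c * bf A w w.
Proof.
rewrite /qf /bf adjmxD adjmxZ !mulmxDl !mulmxDr -!scalemxAl -!scalemxAr.
rewrite !entryD !entryZ; ring.
Qed.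

Lemma psd_herm n (X : 'M[C]_n) : psd X -> forall x y, X y x = (X x y)^*.
Proof.
move=> H x y.
have HR : forall v, qf X v \is Num.real by move=> v; apply: ger0_real; apply: H.
case: (eqVneq x y) => [->|Hxy].
  have := HR (delta_mx y 0); rewrite qf_delta => /CrealP H1; by rewrite H1.
have E c : qf X (delta_mx x 0 + c *: delta_mx y 0) =
   X x x + c * X x y + c^* * X y x + c^* * c * X y y by rewrite qf_comb !bf_delta.
have Rx := HR (delta_mx x 0); have Ry := HR (delta_mx y 0).
rewrite qf_delta in Rx; rewrite qf_delta in Ry.
have R1 : X x y + X y x \is Num.real.
  have := HR (delta_mx x 0 + 1 *: delta_mx y 0); rewrite E conjC1 !mul1r => H1.
  have -> : X x y + X y x = X x x + X x y + X y x + X y y - X x x - X y y by ring.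
  by rewrite !rpredB.
have Hii : - 'i * 'i = 1 :> C by rewrite mulNr -expr2 sqrCi opprK.
have Ei : ('i : C)^* = - 'i by rewrite conjCi.
have R2 : 'i * (X x y - X y x) \is Num.real.
  have := HR (delta_mx x 0 + 'i *: delta_mx y 0); rewrite E Ei => H1.
  have -> : 'i * (X x y - X y x) = X x x + 'i * X x y + - 'i * X y x + - 'i * 'i * X y y - X x x
     - (- 'i * 'i) * X y y by ring.
  by rewrite Hii mul1r in H1 *; rewrite !rpredB.
set a := X x y; set b := X y x.
have e1 : a^* + b^* = a + b by rewrite -rmorphD; apply/CrealP.
have e2 : - 'i * (a^* - b^*) = 'i * (a - b) by rewrite -Ei -rmorphB -rmorphM; apply/CrealP.
have e3 : 'i * (b^* - a^*) = 'i * (a - b) by rewrite -e2; ring.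
have e4 := mulfI (neq0Ci C) e3.
apply: (@mulfI _ 2%:R); first by rewrite pnatr_eq0.
have -> : 2%:R * b = (a + b) - (a - b) by ring.
by rewrite -e1 -e4; ring.
Qed.

End S_F.

Section S_G.
Variable R : realType.
Local Notation C := (R[i]).
Local Open Scope sesquilinear_scope.

Lemma adj_tc m n (M : 'M[C]_(m, n)) : adjmx (M ^t* ) = M.
Proof. by apply/matrixP => i j; rewrite !mxE conjCK. Qed.

Lemma psd_decomp n (X : 'M[C]_n) : psd X ->
  exists (P : 'M[C]_n) (d : 'rV[C]_n), (forall l, 0 <= d 0 l) /\
    (forall x y, X x y = \sum_l (P l x)^* * d 0 l * P l y).
Proof.
move=> HX.
have herm : X ^t* = X.
  by apply/matrixP => x y; rewrite !mxE (psd_herm HX x y) conjCK.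
have /orthomx_spectralP HXe : X \is normalmx by apply/normalmxP; rewrite herm.
have PU := spectral_unitarymx X.
rewrite invmx_unitary // in HXe.
exists (spectralmx X), (spectral_diag X); split.
  move=> l; have := HX ((spectralmx X)^t* *m delta_mx l 0).
  rewrite adjmxM adj_tc {2}HXe !mulmxA !mulmxtVK //.
  by rewrite -/(qf _ _) qf_delta mxE eqxx mulr1n.
move=> x y; rewrite {1}HXe mxE; apply: eq_bigr => l _.
by rewrite mul_mx_diag !mxE.
Qed.

End S_G.

Section S_H.
Variable R : realType.
Local Notation C := (R[i]).

Definition choi_form a b (M : 'M[C]_a -> 'M[C]_b) (z : 'cV[C]_(a * b)) : C :=
 \sum_r \sum_u \sum_s \sum_v (z (mxtens_index (r, u)) 0)^* * M (delta_mx r s) u v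
     * z (mxtens_index (s, v)) 0.

Lemma choi_cp a b (M : 'M[C]_a -> 'M[C]_b) (HM : linear M)
  (HJ : forall z, 0 <= choi_form M z) : completely_positive M.
Proof.
move=> k X HX w.
have [P [d [d0 Xe]]] := psd_decomp HX.
pose z (l : 'I_(k * a)) : 'cV[C]_(a * b) := \col_x \sum_(j < k)
   P l (mxtens_index (j, (mxtens_unindex x).1)) * w (mxtens_index (j, (mxtens_unindex x).2)) 0.
pose F (l : 'I_(k * a)) (i : 'I_k) (u : 'I_b) (j : 'I_k) (v : 'I_b) (r s : 'I_a) :=
  (P l (mxtens_index (i, r)))^* * d 0 l * P l (mxtens_index (j, s)) *
  (w (mxtens_index (i, u)) 0)^* * M (delta_mx r s) u v * w (mxtens_index (j, v)) 0.
have E1 : qf (id_tens M X) w =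
   \sum_i \sum_u \sum_j \sum_v \sum_r \sum_s \sum_l F l i u j v r s.
  rewrite qfE sum_tens; apply: eq_bigr => i _; apply: eq_bigr => u _.
  rewrite sum_tens; apply: eq_bigr => j _; apply: eq_bigr => v _.
  rewrite (@id_tensE R k a b) (N_block HM).
  rewrite big_distrr big_distrl; apply: eq_bigr => r _ /=.
  rewrite big_distrr big_distrl; apply: eq_bigr => s _ /=.
  rewrite Xe big_distrl big_distrr big_distrl; apply: eq_bigr => l _ /=.
  rewrite /F; ring.
have E2 : \sum_l d 0 l * choi_form M (z l) =
   \sum_l \sum_r \sum_u \sum_s \sum_v \sum_i \sum_j F l i u j v r s.
  apply: eq_bigr => l _; rewrite /choi_form big_distrr; apply: eq_bigr => r _ /=.
  rewrite big_distrr; apply: eq_bigr => u _ /=.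
  rewrite big_distrr; apply: eq_bigr => s _ /=.
  rewrite big_distrr; apply: eq_bigr => v _ /=.
  rewrite !mxE !mxtens_indexK /= rmorph_sum.
  rewrite big_distrl big_distrl big_distrr; apply: eq_bigr => i _.
  rewrite big_distrr big_distrr; apply: eq_bigr => j _.
  rewrite /= rmorphM /F /=; ring.
have E3 : \sum_i \sum_u \sum_j \sum_v \sum_r \sum_s \sum_l F l i u j v r s =
   \sum_l \sum_r \sum_u \sum_s \sum_v \sum_i \sum_j F l i u j v r s.
  rewrite !pair_big /=.
  pose h (q : 'I_(k * a) * 'I_a * 'I_b * 'I_a * 'I_b * 'I_k * 'I_k) :
     'I_k * 'I_b * 'I_k * 'I_b * 'I_a * 'I_a * 'I_(k * a) :=
    let: (l, r, u, s, v, i, j) := q in (i, u, j, v, r, s, l).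
  pose h' (q : 'I_k * 'I_b * 'I_k * 'I_b * 'I_a * 'I_a * 'I_(k * a)) :
     'I_(k * a) * 'I_a * 'I_b * 'I_a * 'I_b * 'I_k * 'I_k :=
    let: (i, u, j, v, r, s, l) := q in (l, r, u, s, v, i, j).
  rewrite (reindex h) /=; last first.
    by exists h' => [q _|q _]; case: q => [[[[[[? ?] ?] ?] ?] ?] ?]; rewrite /h /h' /=.
  apply: eq_bigr => q _; case: q => [[[[[[l r] u] s] v] i] j]; by rewrite /h /=.
change (0 <= qf (id_tens M X) w).
rewrite E1 E3 -E2; apply: sumr_ge0 => l _; apply: mulr_ge0 => //.
Qed.

End S_H.

Section S_I.
Variable R : realType.
Local Notation C := (R[i]).

Lemma entryN m n (A : 'M[C]_(m, n)) i j : (- A) i j = - A i j.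
Proof. by rewrite mxE. Qed.

Lemma tr_delta a (r s : 'I_a) : \tr (delta_mx r s : 'M[C]_a) = (r == s)%:R.
Proof.
rewrite /mxtrace (sum_only r) => [|x Hx]; first by rewrite mxE eqxx.
by rewrite mxE (negbTE Hx).
Qed.

Definition cst a : C := ((Num.sqrt (a%:R^-1 : R))%:C)%C.

Lemma cst_sq a : (cst a)^* * cst a = a%:R^-1.
Proof.
have hr : cst a \is Num.real by apply: ger0_real; rewrite /cst ler0c sqrtr_ge0.
rewrite conj_Creal // /cst -rmorphM -expr2 sqr_sqrtr ?invr_ge0 ?ler0n //.
by rewrite fmorphV rmorph_nat.
Qed.

Definition phiv a : 'cV[C]_(a * a) :=
  \col_x (if (mxtens_unindex x).1 == (mxtens_unindex x).2 then cst a else 0).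
Definition Phi a := phiv a *m adjmx (phiv a).

Lemma Phi_pure a : (0 < a)%N -> pure_state (Phi a).
Proof.
move=> a0; exists (phiv a); split => //.
apply/matrixP => i j; rewrite !ord1 [RHS]mxE eqxx mulr1n mxE sum_tens.
rewrite (eq_bigr (fun _ => a%:R^-1)) => [|r _].
  by rewrite sumr_const card_ord -[LHS]mulr_natr mulVf // pnatr_eq0 -lt0n.
rewrite (sum_only r) => [|u Hu]; last by rewrite !mxE !mxtens_indexK /= eq_sym (negbTE Hu) conjC0 mul0r.
by rewrite !mxE !mxtens_indexK /= eqxx cst_sq.
Qed.

Lemma Phi_block a r s : blockmx (Phi a) r s = a%:R^-1 *: delta_mx r s.
Proof.
apply/matrixP => u v; rewrite !mxE big_ord1 !mxE !mxtens_indexK /=.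
have [e1|Hru] := eqVneq r u; have [e2|Hsv] := eqVneq s v; try subst u; try subst v => /=.
- by rewrite mulr1n mulr1 mulrC cst_sq.
- by rewrite conjC0 !mulr0.
- by rewrite !mul0r mulr0n mulr0.
- by rewrite !mul0r mulr0n mulr0.
Qed.

Lemma upper a b (N : 'M[C]_a -> 'M[C]_b) (HN : linear N) (TP : trace_preserving N)
  (a0 : (0 < a)%N) (b0 : (0 < b)%N) (s0 : R) :
  loewner_le (id_tens N (Phi a)) ((s0%:C)%C *: (ptrace2 (id_tens N (Phi a)) *t (1%:M : 'M[C]_b))) ->
  completely_positive (fun X => (((b%:R * s0)%:C)%C) *: @unif_channel R a b X - N X).
Proof.
move=> HL; apply: choi_cp.
  move=> c u v /=; rewrite /unif_channel mxtraceD mxtraceZ HN.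
  by apply/matrixP => i j; rewrite !mxE; ring.
move=> z.
have -> : choi_form (fun X => (((b%:R * s0)%:C)%C) *: @unif_channel R a b X - N X) z =
   a%:R * qf ((s0%:C)%C *: (ptrace2 (id_tens N (Phi a)) *t (1%:M : 'M[C]_b)) - id_tens N (Phi a)) z.
  rewrite qfE sum_tens big_distrr /choi_form; apply: eq_bigr => r _; rewrite big_distrr.
  apply: eq_bigr => u _; rewrite sum_tens big_distrr /=; apply: eq_bigr => s _.
  rewrite big_distrr; apply: eq_bigr => v _ /=.
  rewrite !entryD !entryN !entryZ tensmxE ptrace2_id_tens // (@id_tensE R a a b).
  rewrite !Phi_block linZ // mxtraceZ tr_delta entryZ !(@mxE _ b b _ _ u v).
  rewrite rmorphM rmorph_nat /=.
  have a0' : (a%:R : C) != 0 by rewrite pnatr_eq0 -lt0n.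
  have b0' : (b%:R : C) != 0 by rewrite pnatr_eq0 -lt0n.
  by field; rewrite ?a0' ?b0'.
by apply: mulr_ge0; [rewrite ler0n | apply: HL].
Qed.

End S_I.
Arguments Phi {R} a.
Arguments phiv {R} a.

Section S_J.
Variable R : realType.
Local Notation C := (R[i]).

Lemma norm_re (x : C) : `|x| = ((complex.Re `|x|)%:C)%C.
Proof. by rewrite RRe_real // normr_real. Qed.

Lemma qf_lin n c (A B : 'M[C]_n) v : qf (c *: A - B) v = c * qf A v - qf B v.
Proof.
rewrite /qf mulmxBr -scalemxAr mulmxBl -scalemxAl entryD entryN entryZ.
by [].
Qed.

Lemma qf_bound n (Y : 'M[C]_n) : psd Y ->
  exists K : R, forall v, qf Y v <= (K%:C)%C * qf 1%:M v.
Proof.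
move=> HY; pose m x y := complex.Re `|Y x y|.
exists (\sum_x \sum_y m x y) => v.
pose nn z := complex.Re `|v z 0|.
have En z : `|v z 0| = ((nn z)%:C)%C by rewrite /nn -norm_re.
have Em x y : `|Y x y| = ((m x y)%:C)%C by rewrite /m -norm_re.
have nn0 z : 0 <= nn z by rewrite -ler0c -En.
have m0 x y : 0 <= m x y by rewrite -ler0c -Em.
set T := \sum_z nn z ^+ 2.
have ES : qf 1%:M v = (T%:C)%C.
  rewrite qfE rmorph_sum; apply: eq_bigr => z _.
  rewrite (sum_only z) => [|y Hy]; last by rewrite mxE eq_sym (negbTE Hy) mulr0 mul0r.
  by rewrite mxE eqxx mulr1 -normCKC En rmorphXn.
have Hq0 : 0 <= qf Y v := HY v.
rewrite ES.
apply: (le_trans (y := `|qf Y v|)); first by rewrite ger0_norm.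
have -> : (((\sum_x \sum_y m x y)%:C)%C * (T%:C)%C) = \sum_x \sum_y ((m x y * T)%:C)%C.
  rewrite rmorph_sum mulr_suml; apply: eq_bigr => x _.
  rewrite rmorph_sum mulr_suml; apply: eq_bigr => y _.
  by rewrite rmorphM.
rewrite qfE; apply: (le_trans (ler_norm_sum _ _ _)).
apply: ler_sum => x _; apply: (le_trans (ler_norm_sum _ _ _)); apply: ler_sum => y _.
rewrite !normrM norm_conjC En Em (En y).
have -> : ((nn x)%:C)%C * ((m x y)%:C)%C * ((nn y)%:C)%C = ((nn x * m x y * nn y)%:C)%C.
  by rewrite !rmorphM.
rewrite lecR.
have Tz z : nn z ^+ 2 <= T.
  rewrite /T (bigD1 z) //= lerDl; apply: sumr_ge0 => w _; exact: sqr_ge0.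
have := Tz x; have := Tz y; have := nn0 x; have := nn0 y; have := m0 x y.
move: (nn x) (nn y) (m x y) => p q r hr hq hp hqT hpT.
have h1 : p * q <= T by nra.
have h2 : 0 <= r * (T - p * q) by apply: mulr_ge0; rewrite // subr_ge0.
nra.
Qed.

End S_J.

Section S_K.
Variable R : realType.
Local Notation C := (R[i]).

Lemma rho_bdd a b (N : 'M[C]_a -> 'M[C]_b) (CP : completely_positive N)
  (TP : trace_preserving N) (a0 : (0 < a)%N) :
  exists s0 : R, loewner_le (id_tens N (Phi a))
     ((s0%:C)%C *: (ptrace2 (id_tens N (Phi a)) *t (1%:M : 'M[C]_b))).
Proof.
have psdr : psd (id_tens N (Phi a)) := CP a (Phi a) (pure_psd (@Phi_pure R a a0)).
have [K HK] := qf_bound psdr.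
have ET : ptrace2 (id_tens N (Phi a)) *t (1%:M : 'M[C]_b) = a%:R^-1 *: 1%:M.
  apply/matrixP => x y; case: (mxtens_indexP x) => r u; case: (mxtens_indexP y) => s v.
  rewrite tensmxE ptrace2_id_tens // Phi_block mxtraceZ tr_delta !mxE.
  rewrite (inj_eq (can_inj (@mxtens_indexK _ _))) xpair_eqE.
  by case: eqP => _; case: eqP => _ /=; rewrite ?mulr1 ?mulr0 ?mul0r.
exists (a%:R * K) => v.
rewrite -/(qf _ v) ET scalerA qf_lin.
have -> : ((a%:R * K)%:C)%C * a%:R^-1 = (K%:C)%C.
  by rewrite rmorphM rmorph_nat mulrAC mulfV ?mul1r // pnatr_eq0 -lt0n.
by rewrite subr_ge0 HK.
Qed.

Lemma inf_scale_le (S1 S2 : set R) c : 0 < c ->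
  (forall t, S1 t -> S2 (t / c)) -> has_lbound S2 -> nonempty S1 -> c * inf S2 <= inf S1.
Proof.
move=> c0 H hl ne; apply: (@lb_le_inf R S1 (c * inf S2) ne) => t St.
have := ge_inf hl (H t St); rewrite ler_pdivlMr // mulrC; exact.
Qed.

Lemma inf_scale_ge (S1 S2 : set R) c : 0 < c ->
  (forall s, S2 s -> S1 (c * s)) -> has_lbound S1 -> nonempty S2 -> inf S1 <= c * inf S2.
Proof.
move=> c0 H hl ne; rewrite -ler_pdivrMl // mulrC; apply: (@lb_le_inf R S2 (inf S1 / c) ne) => s Ss.
rewrite ler_pdivrMr // mulrC; have := ge_inf hl (H s Ss); exact.
Qed.

End S_K.

Unset Implicit Arguments.

Theorem mainTheorem13 (R : realType) (dA dB : nat)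
  (N : 'M[R[i]]_dA -> 'M[R[i]]_dB) :
  (0 < dA)%N -> (0 < dB)%N ->
  linear N -> completely_positive N -> trace_preserving N ->
  (exists psi : 'M[R[i]]_(dA * dA), pure_state psi /\
     log2 (dB%:R : R) - Dmax_channel N = Hmin (@id_tens _ dA dA dB N psi)) /\
  (forall psi : 'M[R[i]]_(dA * dA), pure_state psi ->
     log2 (dB%:R : R) - Dmax_channel N <= Hmin (@id_tens _ dA dA dB N psi)).
Proof.
move=> a0 b0 HN CP TP.
pose Sch := [set t : R | 0 <= t /\
   completely_positive (fun X => (t%:C)%C *: @unif_channel R dA dB X - N X)]%classic.
pose Sst (psi : 'M[R[i]]_(dA * dA)) := [set t : R | loewner_le (id_tens N psi)
   ((t%:C)%C *: (ptrace2 (id_tens N psi) *t (1%:M : 'M[R[i]]_dB)))]%classic.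
have EDc : Dmax_channel N = log2 (inf Sch) by [].
have EH psi : Hmin (id_tens N psi) = - log2 (inf (Sst psi)) by [].
have b0r : 0 < (dB%:R : R) by rewrite ltr0n.
have lowS psi : psd psi -> forall t, Sch t -> Sst psi (t / dB%:R).
  by move=> Hp t [_ Ht]; exact: (lower TP Ht Hp).
have lbS psi : pure_state psi -> forall s, Sst psi s -> dB%:R^-1 <= s.
  by move=> Hp s Hs; exact: (st_lb TP (pure_tr Hp) b0 Hs).
have [s0 Hs0] := rho_bdd CP TP a0.
have PhiP := @Phi_pure R dA a0.
have upS : forall s, Sst (Phi dA) s -> Sch (dB%:R * s).
  move=> s Hs; split; last exact: (upper HN TP a0 b0 Hs).
  apply: mulr_ge0; first exact: ler0n.
  by apply: le_trans (lbS _ PhiP s Hs); rewrite invr_ge0 ler0n.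
have neSch : (Sch !=set0)%classic by exists (dB%:R * s0); exact: upS.
have hlCh : has_lbound Sch by exists 0 => t [].
have hlS psi : pure_state psi -> has_lbound (Sst psi).
  by move=> Hp; exists dB%:R^-1 => s Hs; exact: (lbS psi Hp s Hs).
have neS psi : pure_state psi -> (Sst psi !=set0)%classic.
  move=> Hp; have [t Ht] := neSch; exists (t / dB%:R); exact: lowS (pure_psd Hp) t Ht.
have iSpos psi : pure_state psi -> 0 < inf (Sst psi).
  move=> Hp; apply: lt_le_trans (lb_le_inf (neS _ Hp) (lbS _ Hp)).
  by rewrite invr_gt0.
have Hle psi : pure_state psi -> dB%:R * inf (Sst psi) <= inf Sch.
  by move=> Hp; apply: inf_scale_le b0r (lowS _ (pure_psd Hp)) (hlS _ Hp) neSch.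
have HeqPhi : inf Sch = dB%:R * inf (Sst (Phi dA)).
  apply/eqP; rewrite eq_le; apply/andP; split.
    exact: inf_scale_ge b0r upS hlCh (neS _ PhiP).
  exact: Hle _ PhiP.
have ln2 : 0 < ln (2 : R) by apply: ln_gt0; rewrite ltr1n.
have lnMb (x : R) : 0 < x -> ln (dB%:R * x) = ln dB%:R + ln x.
  by move=> x0; rewrite lnM // posrE.
split.
  exists (Phi dA); split => //.
  rewrite EDc EH HeqPhi /log2 lnMb; last exact: iSpos.
  ring.
move=> psi Hp.
rewrite EDc EH /log2.
have h1 : ln (dB%:R * inf (Sst psi)) <= ln (inf Sch).
  have p1 : 0 < dB%:R * inf (Sst psi) by apply: mulr_gt0 => //; exact: iSpos.
  rewrite ler_ln ?posrE //; first exact: Hle.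
  exact: lt_le_trans p1 (Hle _ Hp).
rewrite lnMb ?iSpos // in h1.
have h2 : (ln (dB%:R : R) + ln (inf (Sst psi))) / ln 2 <= ln (inf Sch) / ln 2.
  by rewrite ler_pM2r ?invr_gt0.
rewrite mulrDl in h2; lra.
Qed.
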